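(* There is an absolute constant $C>0$ such that the following holds. Let $n\ge 2$ and let $T:\mathbb{C}\times S^1\to\mathbb{C}$ satisfy $\mathrm{Lip}(T_\theta-\mathrm{Id})<\frac{1}{8n}$ for every $\theta$. Then for all $j<\log n$ and all $k$, $|A_{j,k,T}|\le C\,4^{2n-k-2j}$, where $|A_{j,k,T}|$ denotes the cardinality of $A_{j,k,T}$.
   Context: Middle-half Cantor set: $\mathcal{C}_0=[0,1]$ and $\mathcal{C}_{n+1}$ is obtained from $\mathcal{C}_n$ by replacing each of its intervals by the first and last quarters of that interval; $\mathcal{K}_n:=\mathcal{C}_n\times\mathcal{C}_n$ is the union of $4^n$ squares (''Cantor squares'') of side $4^{-n}$. For $T:\mathbb{C}\times S^1\to\mathbb{C}$ write $T_\theta(z):=T(z,e^{i\theta})$. Work in the rotated coordinate system $(x,y)$ whose positive $x$-axis points in the direction making angle $\arctan(1/2)$ with the standard $x$-axis. For integers $j,k$, $A_{j,k}$ is the set of pairs $(Q,Q')$ of Cantor squares of $\mathcal{K}_n$ whose centers $q=(x_q,y_q)$, $q'=(x_{q'},y_{q'})$ satisfy $4^{-k-1}\le|y_q-y_{q'}|\le 4^{-k}$ and $4^{-j-1}\le\left|\frac{x_q-x_{q'}}{y_q-y_{q'}}\right|\le 4^{-j}$. $A_{j,k,T}$ is the set of pairs $(Q,Q')$ of Cantor squares such that for some $\theta$ the images $(T_\theta(Q),T_\theta(Q'))$ satisfy the same conditions, i.e. the images $T_\theta(q),T_\theta(q')$ of the centers satisfy the two displayed inequalities. *)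

(* Defs.v *)
From Stdlib Require Import Reals ZArith ClassicalEpsilon.
From mathcomp Require Import ssreflect ssrfun ssrbool eqtype ssrnat seq choice fintype finfun bigop finset.

Set Implicit Arguments.
Unset Strict Implicit.
Unset Printing Implicit Defensive.

(* Points of C are represented as pairs of reals (Re, Im). *)
Definition pt := (R * R)%type.

Definition padd (p q : pt) : pt := (fst p + fst q, snd p + snd q)%R.
Definition psub (p q : pt) : pt := (fst p - fst q, snd p - snd q)%R.
Definition pnorm (p : pt) : R := sqrt (fst p ^ 2 + snd p ^ 2)%R.

(* T : C x S^1 -> C ;  T_theta(z) := T(z, e^{i theta}) with e^{i theta} = (cos theta, sin theta). *)
Definition Tth (T : pt -> pt -> pt) (theta : R) (z : pt) : pt := T z (cos theta, sin theta).

Definition lip_lt (f : pt -> pt) (c : R) : Prop :=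
  exists L : R, (L < c)%R /\
    forall z w : pt, (pnorm (psub (f z) (f w)) <= L * pnorm (psub z w))%R.

(* A Cantor interval of C_n is coded by its digit string a in {0,3}^n
   (true = digit 3): its left endpoint is sum_{i<n} a_i * 4^{-(i+1)},
   its length is 4^{-n}. *)
Definition digits (n : nat) := {ffun 'I_n -> bool}.

Definition cantor_center (n : nat) (a : digits n) : R :=
  (\big[Rplus/0%R]_(i < n) ((if a i then 3 else 0) * / 4 ^ (i.+1))
   + / 2 * / 4 ^ n)%R.

Definition csquare (n : nat) := (digits n * digits n)%type.

Definition sq_center (n : nat) (Q : csquare n) : pt :=
  (cantor_center Q.1, cantor_center Q.2).

(* Rotated coordinates: positive x-axis in direction arctan(1/2),
   i.e. unit vector (2,1)/sqrt 5; y-axis unit vector (-1,2)/sqrt 5. *)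
Definition xrot (p : pt) : R := ((2 * fst p + snd p) / sqrt 5)%R.
Definition yrot (p : pt) : R := ((- fst p + 2 * snd p) / sqrt 5)%R.

Definition in_Ajk (j k : Z) (q q' : pt) : Prop :=
  (powerRZ 4 (- k - 1) <= Rabs (yrot q - yrot q') <= powerRZ 4 (- k))%R /\
  (powerRZ 4 (- j - 1) <= Rabs ((xrot q - xrot q') / (yrot q - yrot q'))
     <= powerRZ 4 (- j))%R.

Definition pbool (P : Prop) : bool :=
  if excluded_middle_informative P then true else false.

Definition AjkT (n : nat) (j k : Z) (T : pt -> pt -> pt) : {set csquare n * csquare n} :=
  [set PQ : csquare n * csquare n |
     pbool (exists theta : R,
              in_Ajk j k (Tth T theta (sq_center PQ.1)) (Tth T theta (sq_center PQ.2)))].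

(* Main.v *)
Require Import Defs.
From Stdlib Require Import Reals ZArith Lia Lra Psatz ClassicalEpsilon.
From mathcomp Require Import ssreflect ssrfun ssrbool eqtype ssrnat seq choice fintype finfun bigop finset div.
From mathcomp Require Import zify.
Set Implicit Arguments. Unset Strict Implicit. Unset Printing Implicit Defensive.

Definition V (c : nat -> bool) (a : nat) : nat := \sum_(i < a) c i * 4 ^ i.

Lemma V_split c a b : V c (a + b) = V c a + 4 ^ a * V (fun i => c (a + i)) b.
Proof.
rewrite /V big_split_ord /=; congr (_ + _).
rewrite big_distrr /=; apply: eq_bigr => i _; rewrite expnD; lia.
Qed.

Lemma V_S c a : V c a.+1 = V c a + c a * 4 ^ a.
Proof. by rewrite /V big_ord_recr. Qed.

Lemma V_bound c a : 3 * V c a < 4 ^ a.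
Proof.
elim: a => [|a IH]; first by rewrite /V big_ord0.
rewrite V_S expnS; case: (c a) => /=; lia.
Qed.

Lemma divmod_uniq B x y x' y' : x < B -> x' < B -> x + y * B = x' + y' * B -> x = x' /\ y = y'.
Proof.
move=> hx hx' e.
have B0 : 0 < B by lia.
have h1 := congr1 (fun z => z %% B) e; have h2 := congr1 (fun z => z %/ B) e.
move: h1 h2 => /=. rewrite !(addnC _ (_ * B)) !modnMDl !divnMDl // !modn_small // !divn_small //.
lia.
Qed.

Lemma V_uniq2 c e c' e' a : 2 * V c a + V e a = 2 * V c' a + V e' a -> V c a = V c' a /\ V e a = V e' a.
Proof.
elim: a => [|a IH]; first by rewrite /V !big_ord0.
rewrite !V_S => h.
have b1 := V_bound c a; have b2 := V_bound e a; have b3 := V_bound c' a; have b4 := V_bound e' a.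
have [h1 h2] : 2 * V c a + V e a = 2 * V c' a + V e' a /\ 2 * c a + e a = 2 * c' a + e' a.
  apply: (@divmod_uniq (4 ^ a)); lia.
have [-> ->] := IH h1.
case: (c a) (e a) (c' a) (e' a) h2 => [] [] [] [] //= _; lia.
Qed.

Lemma V_inj c c' a : V c a = V c' a -> forall i, i < a -> c i = c' i.
Proof.
elim: a => [|a IH] //. rewrite !V_S => h i hi.
have b1 := V_bound c a; have b3 := V_bound c' a.
have [h1 h2] : V c a = V c' a /\ nat_of_bool (c a) = c' a.
  apply: (@divmod_uniq (4 ^ a)); lia.
case: (ltngtP i a) => [lt|gt|->]; first exact: IH.
  lia.
by case: (c a) (c' a) h2 => [] [].
Qed.

Definition Pn (c e : nat -> bool) n := 2 * V c n + V e n.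
Definition Yz (c e : nat -> bool) n : Z := (2 * Z.of_nat (V e n) - Z.of_nat (V c n))%Z.

Lemma block c e c' e' n r : r <= n ->
  Pn c e n %/ 4 ^ r = Pn c' e' n %/ 4 ^ r ->
  (Z.abs (Yz c e n - Yz c' e' n) < Z.of_nat (4 ^ r))%Z.
Proof.
move=> rn.
rewrite /Pn /Yz -(subnKC rn) !V_split.
set H1 := V _ (n - r); set H2 := V _ (n - r); set H3 := V _ (n - r); set H4 := V _ (n - r).
have b1 := V_bound c r; have b2 := V_bound e r; have b3 := V_bound c' r; have b4 := V_bound e' r.
have p4 : 0 < 4 ^ r by rewrite expn_gt0.
have q1 : (2 * (V c r + 4 ^ r * H1) + (V e r + 4 ^ r * H2)) = (2 * V c r + V e r) + (2 * H1 + H2) * 4 ^ r by lia.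
have q2 : (2 * (V c' r + 4 ^ r * H3) + (V e' r + 4 ^ r * H4)) = (2 * V c' r + V e' r) + (2 * H3 + H4) * 4 ^ r by lia.
rewrite q1 q2 !(addnC (2 * V _ r + _)) !divnMDl // !divn_small; try lia.
rewrite !addn0 => h.
have [e1 e2] := V_uniq2 h.
rewrite /H1 /H2 /H3 /H4 in e1 e2 *. rewrite e1 e2. lia.
Qed.

Definition dn (x y : nat) := (x - y) + (y - x).

Lemma count_sub (T : eqType) (a : pred T) (s r : seq T) :
  uniq s -> (forall x, x \in s -> a x -> x \in r) -> count a s <= size r.
Proof.
move=> us h; rewrite -size_filter; apply: uniq_leq_size; first exact: filter_uniq.
by move=> x; rewrite mem_filter => /andP[ax xs]; apply: h.
Qed.

Lemma card_sub_nat (X : finType) (P : X -> nat) (A : {set X}) (r : seq nat) :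
  injective P -> (forall Q, Q \in A -> P Q \in r) -> #|A| <= size r.
Proof.
move=> iP h; rewrite cardE -(size_map P); apply: uniq_leq_size.
  by rewrite map_inj_uniq // enum_uniq.
move=> y /mapP [Q]; rewrite mem_enum => QA ->; exact: h.
Qed.

Lemma card_pairs (X : finType) (c : X -> X -> bool) :
  #|[set PQ : X * X | c PQ.1 PQ.2]| = \sum_(Q : X) #|[set Q' | c Q Q']|.
Proof.
rewrite -sum1_card.
rewrite (eq_bigr (fun Q => \sum_(Q' | c Q Q') 1)); last first.
  by move=> Q _; rewrite -sum1_card; apply: eq_bigl => Q'; rewrite inE.
rewrite pair_big_dep /=; apply: eq_bigl => PQ; by rewrite inE.
Qed.

Section Count.
Variables (X : finType) (P : X -> nat) (N : nat).
Hypothesis iP : injective P.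
Hypothesis hP : forall Q, P Q < N.

Lemma fiber_bound x m : #|[set Q' | 0 < dn x (P Q') <= m]| <= 2 * m.
Proof.
have -> : 2 * m = size (iota (x - m) m ++ iota x.+1 m) by rewrite size_cat !size_iota; lia.
apply: (@card_sub_nat _ P) => // Q; rewrite inE /dn => h.
rewrite mem_cat !mem_iota; lia.
Qed.

Lemma cardX_le : #|X| <= N.
Proof.
rewrite -cardsT -(size_iota 0 N); apply: (@card_sub_nat _ P) => // Q _; rewrite mem_iota; have := hP Q; lia.
Qed.

Lemma L1 m : #|[set PQ : X * X | 0 < dn (P PQ.1) (P PQ.2) <= m]| <= N * (2 * m).
Proof.
rewrite (@card_pairs _ (fun a b => 0 < dn (P a) (P b) <= m)).
apply: (@leq_trans (\sum_(Q : X) 2 * m)); first by apply: leq_sum => Q _; apply: fiber_bound.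
rewrite sum_nat_const; apply: leq_mul => //; exact: cardX_le.
Qed.

Definition near B m x := (x %% B < m) || (B - m <= x %% B).

Lemma count_mod (g : pred nat) A B :
  count (fun x => g (x %% B)) (iota 0 (A * B)) = A * count g (iota 0 B).
Proof.
elim: A => [|A IH] //.
rewrite mulSnr iotaD count_cat IH add0n mulSnr; congr (_ + _).
rewrite -(addn0 (A * B)) iotaDl count_map; apply: eq_in_count => y; rewrite mem_iota => /andP[_ hy] /=.
by rewrite modnMDl modn_small.
Qed.

Lemma count_near B m : count (fun y => (y < m) || (B - m <= y)) (iota 0 B) <= 2 * m.
Proof.
have e := count_predUI (fun x => x < m) (fun x => B - m <= x) (iota 0 B).
have c1 : count (fun x => x < m) (iota 0 B) <= m.
  have := @count_sub _ (fun x => x < m) (iota 0 B) (iota 0 m) (iota_uniq _ _); rewrite size_iota; apply.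
  move=> x; rewrite !mem_iota => hx; lia.
have c2 : count (fun x => B - m <= x) (iota 0 B) <= m.
  have := @count_sub _ (fun x => B - m <= x) (iota 0 B) (iota (B - m) m) (iota_uniq _ _); rewrite size_iota; apply.
  move=> x; rewrite !mem_iota => hx; lia.
have : count (predU (fun x => x < m) (fun x => B - m <= x)) (iota 0 B) <= 2 * m by lia.
by apply: leq_trans; apply: sub_count => x.
Qed.

Lemma L2 m A B : N = A * B -> 0 < B ->
  #|[set PQ : X * X | (0 < dn (P PQ.1) (P PQ.2) <= m) && (P PQ.1 %/ B != P PQ.2 %/ B)]| <= A * (2 * m) * (2 * m).
Proof.
move=> NAB B0.
rewrite (@card_pairs _ (fun a b => (0 < dn (P a) (P b) <= m) && (P a %/ B != P b %/ B))).
apply: (@leq_trans (\sum_(Q : X) (2 * m) * near B m (P Q))).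
  apply: leq_sum => Q _.
  case nQ: (near B m (P Q)); rewrite ?muln1 ?muln0.
    apply: leq_trans (fiber_bound (P Q) m); apply: subset_leq_card; apply/subsetP => Q'.
    by rewrite !inE => /andP[].
  rewrite leqn0 cards_eq0; apply/eqP/setP => Q'; rewrite !inE.
  apply/negbTE/negP => /andP[hd hb]; move/negbT: nQ; rewrite /near negb_or -!ltnNge => /andP[n1 n2].
  move: hb hd; rewrite /dn.
  have q1 := divn_eq (P Q) B; have q2 := divn_eq (P Q') B.
  set a := P Q %/ B; set a' := P Q' %/ B.
  have r1 : P Q %% B < B by rewrite ltn_mod.
  have r2 : P Q' %% B < B by rewrite ltn_mod.
  case: (ltngtP a a') => // [lt|gt] _.
    have : (a + 1) * B <= a' * B by rewrite leq_mul2r; lia.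
    lia.
  have : (a' + 1) * B <= a * B by rewrite leq_mul2r; lia.
  lia.
rewrite -big_distrr /=.
have -> : \sum_(Q : X) near B m (P Q) = #|[set Q | near B m (P Q)]|.
  rewrite -sum1_card [RHS]big_mkcond /=; apply: eq_bigr => Q _; rewrite inE; by case: (near _ _ _).
rewrite [X in _ <= X]mulnC; apply: leq_mul => //.
apply: (@leq_trans (count (near B m) (iota 0 N))).
  rewrite -size_filter; apply: (@card_sub_nat _ P) => // Q; rewrite inE mem_filter mem_iota => ->; have := hP Q; lia.
rewrite NAB (count_mod (fun y => (y < m) || (B - m <= y))).
apply: leq_mul => //; exact: count_near.
Qed.
End Count.

Section Real.
Open Scope R_scope.
Lemma abs_le_norm x y : Rabs x <= sqrt (x * x + y * y).
Proof.
rewrite -sqrt_Rsqr_abs /Rsqr; apply: sqrt_le_1_alt; nra.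
Qed.

Lemma norm_le_abs x y : sqrt (x * x + y * y) <= Rabs x + Rabs y.
Proof.
rewrite -(sqrt_square (Rabs x + Rabs y)); last by have := Rabs_pos x; have := Rabs_pos y; lra.
apply: sqrt_le_1_alt.
have h1 : Rabs x * Rabs x = x * x by rewrite -Rabs_mult Rabs_right; nra.
have h2 : Rabs y * Rabs y = y * y by rewrite -Rabs_mult Rabs_right; nra.
have := Rabs_pos x; have := Rabs_pos y; nra.
Qed.

Lemma pnorm_rot a b : pnorm (a, b) = sqrt (xrot (a, b) * xrot (a, b) + yrot (a, b) * yrot (a, b)).
Proof.
rewrite /pnorm /xrot /yrot /=; congr sqrt.
have s5 : sqrt 5 * sqrt 5 = 5 by rewrite sqrt_sqrt; lra.
have s0 : 0 < sqrt 5 by apply: sqrt_lt_R0; lra.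
have e : forall u v : R, (u / sqrt 5) * (v / sqrt 5) = u * v / 5.
  move=> u v; rewrite -[in RHS]s5; field; lra.
rewrite !e; field.
Qed.

Lemma xrot_sub p q : xrot p - xrot q = xrot (psub p q).
Proof. rewrite /xrot /psub /=; field; apply: Rgt_not_eq; apply: sqrt_lt_R0; lra. Qed.
Lemma yrot_sub p q : yrot p - yrot q = yrot (psub p q).
Proof. rewrite /yrot /psub /=; field; apply: Rgt_not_eq; apply: sqrt_lt_R0; lra. Qed.

Lemma geo (q q' tq tq' : pt) L l B rho :
 0 < B -> 0 < rho -> L < l -> l <= /16 ->
 pnorm (psub (psub tq q) (psub tq' q')) <= L * pnorm (psub q q') ->
 B / 4 <= Rabs (yrot tq - yrot tq') <= B ->
 Rabs ((xrot tq - xrot tq') / (yrot tq - yrot tq')) <= rho ->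
 (Rabs (xrot q - xrot q') <= 8/7 * (1 + rho) * B) /\
 (xrot q - xrot q' <> 0 \/ yrot q - yrot q' <> 0) /\
 (rho <= 1 -> l <= rho / 8 -> Rabs (xrot q - xrot q') <= 9/7 * rho * B /\ 3/28 * B <= Rabs (yrot q - yrot q')).
Proof.
move=> B0 r0 Ll l16 hlip [hy1 hy2] hr.
set Xd := xrot q - xrot q'; set Yd := yrot q - yrot q'.
set Xw := xrot tq - xrot tq' in hr *; set Yw := yrot tq - yrot tq' in hy1 hy2 hr *.
have eXe : Xw - Xd = xrot (psub (psub tq q) (psub tq' q')).
  rewrite /Xw /Xd !xrot_sub /xrot /psub /=; field; apply: Rgt_not_eq; apply: sqrt_lt_R0; lra.
have eYe : Yw - Yd = yrot (psub (psub tq q) (psub tq' q')).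
  rewrite /Yw /Yd !yrot_sub /yrot /psub /=; field; apply: Rgt_not_eq; apply: sqrt_lt_R0; lra.
move: hlip.
case E1: (psub (psub tq q) (psub tq' q')) => [e1 e2].
case E2: (psub q q') => [d1 d2].
rewrite !pnorm_rot -E1 -E2 -eXe -eYe -xrot_sub -yrot_sub -/Xd -/Yd => hlip.
set D := sqrt (Xd * Xd + Yd * Yd) in hlip *.
set E := sqrt ((Xw - Xd) * (Xw - Xd) + (Yw - Yd) * (Yw - Yd)) in hlip *.
have D0 : 0 <= D := sqrt_pos _.
have E0 : 0 <= E := sqrt_pos _.
have hXe : Rabs (Xw - Xd) <= E by apply: abs_le_norm.
have hYe : Rabs (Yw - Yd) <= E by rewrite /E Rplus_comm; apply: abs_le_norm.
have hD : D <= Rabs Xd + Rabs Yd by apply: norm_le_abs.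
have hXdD : Rabs Xd <= D by apply: abs_le_norm.
have hEl : E <= l * D by nra.
have Yw0 : Yw <> 0 by move=> h; rewrite h Rabs_R0 in hy1; lra.
have hxw : Rabs Xw <= rho * Rabs Yw.
  rewrite Rabs_mult Rabs_inv in hr.
  have ay : 0 < Rabs Yw by apply: Rabs_pos_lt.
  have := Rinv_r (Rabs Yw) (Rgt_not_eq _ _ ay).
  have := Rabs_pos Xw; nra.
have t1 := Rabs_triang_inv Xw (Xw - Xd); have t2 := Rabs_triang_inv Yw (Yw - Yd).
replace (Xw - (Xw - Xd)) with Xd in t1 by ring.
replace (Yw - (Yw - Yd)) with Yd in t2 by ring.
have t3 : Rabs Xd <= Rabs Xw + Rabs (Xw - Xd).
  have := Rabs_triang Xw (- (Xw - Xd)); rewrite Rabs_Ropp; by replace (Xw + - (Xw - Xd)) with Xd by ring.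
have t4 : Rabs Yd <= Rabs Yw + Rabs (Yw - Yd).
  have := Rabs_triang Yw (- (Yw - Yd)); rewrite Rabs_Ropp; by replace (Yw + - (Yw - Yd)) with Yd by ring.
have hDb : D <= 8/7 * (1 + rho) * B by nra.
split; first by lra.
split.
  case: (Req_dec Xd 0) => [hx|]; last by left.
  case: (Req_dec Yd 0) => [hy|]; last by right.
  exfalso. have : D = 0 by rewrite /D hx hy Rmult_0_l Rplus_0_l sqrt_0.
  move=> hD0; rewrite hD0 Rmult_0_r in hEl.
  have := Rabs_pos (Yw - Yd). rewrite hy Rminus_0_r in hYe. lra.
move=> r1 lr.
have hD2 : D <= 16/7 * B by nra.
split; nra.
Qed.

End Real.

Lemma INR_mul a b : INR (a * b) = (INR a * INR b)%R.
Proof. by rewrite mulnE mult_INR. Qed.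
Lemma INR_add a b : INR (a + b) = (INR a + INR b)%R.
Proof. by rewrite addnE plus_INR. Qed.
Lemma INR_exp a k : INR (a ^ k) = (INR a ^ k)%R.
Proof. elim: k => [|k IH] //; by rewrite expnS INR_mul IH. Qed.

Definition ca n (a : digits n) : nat -> bool :=
  fun i => (i < n) && oapp (fun o : 'I_n => a o) false (insub (n.-1 - i)).

Lemma ca_rev n (a : digits n) (i : 'I_n) : ca a i = a (rev_ord i).
Proof.
rewrite /ca ltn_ord /=.
have -> : n.-1 - i = val (rev_ord i) by rewrite /=; have := ltn_ord i; lia.
by rewrite valK.
Qed.

Lemma Nv_V n (a : digits n) : \sum_(i < n) a i * 4 ^ (n.-1 - i) = V (ca a) n.
Proof.
rewrite /V (reindex_inj rev_ord_inj) /=; apply: eq_bigr => i _.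
rewrite ca_rev; congr (_ * 4 ^ _); have := ltn_ord i; lia.
Qed.

Lemma center_eq n (a : digits n) :
  cantor_center a = ((INR (V (ca a) n) * 3 + / 2) / 4 ^ n)%R.
Proof.
rewrite /cantor_center -Nv_V.
have -> : \big[Rplus/0%R]_(i < n) ((if a i then 3 else 0) * / 4 ^ i.+1)%R =
          (INR (\sum_(i < n) a i * 4 ^ (n.-1 - i)) * 3 / 4 ^ n)%R.
  apply: (big_ind2 (fun (u : R) (v : nat) => u = INR v * 3 / 4 ^ n)%R).
  - rewrite /=; field; apply: pow_nonzero; lra.
  - move=> x1 x2 y1 y2 -> ->; rewrite INR_add; field; apply: pow_nonzero; lra.
  - move=> i _; rewrite INR_mul INR_exp.
    have hn : n = (i.+1 + (n.-1 - i))%nat by have := ltn_ord i; lia.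
    rewrite [in (4 ^ n)%R]hn pow_add.
    have h4 : (4 ^ i.+1 <> 0)%R by apply: pow_nonzero; lra.
    have h4' : (4 ^ (n.-1 - i) <> 0)%R by apply: pow_nonzero; lra.
    case: (a i) => /=; rewrite (_ : (1+1+1+1)%R = 4%R); try ring; field; repeat split; try lra; apply: pow_nonzero; lra.
field; apply: pow_nonzero; lra.
Qed.

Section Squares.
Variable n : nat.

Definition N1 (Q : csquare n) := V (ca Q.1) n.
Definition N2 (Q : csquare n) := V (ca Q.2) n.
Definition PP (Q : csquare n) := Pn (ca Q.1) (ca Q.2) n.
Definition YY (Q : csquare n) := Yz (ca Q.1) (ca Q.2) n.

Lemma ca_inj (a b : digits n) : V (ca a) n = V (ca b) n -> a = b.
Proof.
move=> h; apply/ffunP => o.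
have := V_inj h (ltn_ord (rev_ord o)).
by rewrite !ca_rev rev_ordK.
Qed.

Lemma PP_inj : injective PP.
Proof.
move=> [a b] [a' b']; rewrite /PP /Pn /= => h.
have [h1 h2] := V_uniq2 h.
by rewrite (ca_inj h1) (ca_inj h2).
Qed.

Lemma PP_lt Q : PP Q < 4 ^ n.
Proof. rewrite /PP /Pn; have := V_bound (ca Q.1) n; have := V_bound (ca Q.2) n; lia. Qed.

Lemma YY_lt Q Q' : (Z.abs (YY Q - YY Q') < Z.of_nat (4 ^ n))%Z.
Proof.
apply: block => //.
by rewrite !divn_small //; apply: PP_lt.
Qed.

Lemma sqc Q : sq_center Q = ((INR (N1 Q) * 3 + / 2) / 4 ^ n, (INR (N2 Q) * 3 + / 2) / 4 ^ n)%R.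
Proof. by rewrite /sq_center !center_eq. Qed.

Lemma xdiff Q Q' : (xrot (sq_center Q) - xrot (sq_center Q') =
   3 * (INR (PP Q) - INR (PP Q')) / (4 ^ n * sqrt 5))%R.
Proof.
rewrite !sqc /xrot /PP /Pn /= !INR_add ?INR_mul /= /N1 /N2.
field; split; [apply: Rgt_not_eq; apply: sqrt_lt_R0; lra | apply: pow_nonzero; lra].
Qed.

Lemma ydiff Q Q' : (yrot (sq_center Q) - yrot (sq_center Q') =
   3 * IZR (YY Q - YY Q') / (4 ^ n * sqrt 5))%R.
Proof.
rewrite !sqc /yrot /YY /Yz !minus_IZR !mult_IZR -!INR_IZR_INZ /N1 /N2 /=.
field; split; [apply: Rgt_not_eq; apply: sqrt_lt_R0; lra | apply: pow_nonzero; lra].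
Qed.

End Squares.

Lemma pbool_true (P : Prop) : pbool P -> P.
Proof. rewrite /pbool; by case: excluded_middle_informative. Qed.

Lemma powerRZ_m1 k : powerRZ 4 (- k - 1) = (powerRZ 4 (- k) / 4)%R.
Proof.
rewrite (_ : (- k - 1 = - k + (-1))%Z); last lia.
rewrite powerRZ_add; last lra.
by rewrite /= Rmult_1_r.
Qed.

Lemma Rabs_scale x a : (0 < a)%R -> Rabs (x * a / 3) = (Rabs x * a / 3)%R.
Proof.
move=> a0; rewrite /Rdiv !Rabs_mult (Rabs_right a); last lra.
rewrite (Rabs_right (/ 3)) //; apply: Rle_ge; apply: Rlt_le; apply: Rinv_0_lt_compat; lra.
Qed.

Lemma pw n (T : pt -> pt -> pt) (j k : Z) (l : R) (PQ : csquare n * csquare n) :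
  (forall theta, lip_lt (fun z => psub (Tth T theta z) z) l) -> (l <= /16)%R ->
  PQ \in AjkT n j k T ->
  (Rabs (INR (PP PQ.1) - INR (PP PQ.2)) <= 8/7*(1+powerRZ 4 (-j))*powerRZ 4 (-k) * 4^n * sqrt 5 / 3)%R /\
  PP PQ.1 <> PP PQ.2 /\
  ((powerRZ 4 (-j) <= 1)%R -> (l <= powerRZ 4 (-j) / 8)%R ->
     (Rabs (INR (PP PQ.1) - INR (PP PQ.2)) <= 3 * sqrt 5 / 7 * powerRZ 4 (-j) * powerRZ 4 (-k) * 4^n)%R /\
     (sqrt 5 / 28 * powerRZ 4 (-k) * 4^n <= Rabs (IZR (YY PQ.1 - YY PQ.2)))%R).
Proof.
move=> hlip l16; rewrite inE => /pbool_true [th [[ylo yhi] [rlo rhi]]].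
have [L [hL hLip]] := hlip th.
set q := sq_center PQ.1; set q' := sq_center PQ.2.
have B0 : (0 < powerRZ 4 (-k))%R by apply: powerRZ_lt; lra.
have r0 : (0 < powerRZ 4 (-j))%R by apply: powerRZ_lt; lra.
rewrite powerRZ_m1 in ylo.
have [g1 [g2 g3]] := geo B0 r0 hL l16 (hLip q q') (conj ylo yhi) rhi.
have F0 : (0 < 4 ^ n)%R by apply: pow_lt; lra.
have s0 : (0 < sqrt 5)%R by apply: sqrt_lt_R0; lra.
have eX : (INR (PP PQ.1) - INR (PP PQ.2) = (xrot q - xrot q') * (4 ^ n * sqrt 5) / 3)%R.
  rewrite /q /q' xdiff; field; lra.
have eY : (IZR (YY PQ.1 - YY PQ.2) = (yrot q - yrot q') * (4 ^ n * sqrt 5) / 3)%R.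
  rewrite /q /q' ydiff; field; lra.
have aX : (Rabs (INR (PP PQ.1) - INR (PP PQ.2)) = Rabs (xrot q - xrot q') * (4 ^ n * sqrt 5) / 3)%R.
  rewrite eX Rabs_scale //; nra.
have aY : (Rabs (IZR (YY PQ.1 - YY PQ.2)) = Rabs (yrot q - yrot q') * (4 ^ n * sqrt 5) / 3)%R.
  rewrite eY Rabs_scale //; nra.
have Fs : (0 < 4 ^ n * sqrt 5)%R by nra.
split.
  rewrite aX. apply: (Rle_trans _ (8 / 7 * (1 + powerRZ 4 (- j)) * powerRZ 4 (- k) * (4 ^ n * sqrt 5) / 3)); last (right; field).
  rewrite /Rdiv; apply: Rmult_le_compat_r; first lra; apply: Rmult_le_compat_r => //; lra.
split.
  move=> e; have e' := PP_inj e.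
  by rewrite /q /q' e' !Rminus_diag in g2; case: g2.
move=> h1 h2; have [g3a g3b] := g3 h1 h2.
split.
  rewrite aX. apply: (Rle_trans _ (9/7 * powerRZ 4 (- j) * powerRZ 4 (- k) * (4 ^ n * sqrt 5) / 3)); last (right; field).
  rewrite /Rdiv; apply: Rmult_le_compat_r; first lra; apply: Rmult_le_compat_r => //; lra.
rewrite aY. apply: (Rle_trans _ (3/28 * powerRZ 4 (- k) * (4 ^ n * sqrt 5) / 3)); first (right; field).
rewrite /Rdiv; apply: Rmult_le_compat_r; first lra; apply: Rmult_le_compat_r => //; lra.
Qed.

Lemma floor_nat (M : R) : (0 <= M)%R -> exists m : nat, (INR m <= M)%R /\ forall z : nat, (INR z <= M)%R -> z <= m.
Proof.
move=> M0; have [h1 h2] := archimed M.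
have u0 : (0 < up M)%Z by apply: lt_IZR; lra.
exists (Z.to_nat (up M - 1)); split.
  rewrite INR_IZR_INZ Z2Nat.id; last lia.
  rewrite minus_IZR; lra.
move=> z hz; rewrite INR_IZR_INZ in hz.
have : (Z.of_nat z < up M)%Z by apply: lt_IZR; lra.
lia.
Qed.

Lemma INR_dn a b : INR (dn a b) = Rabs (INR a - INR b).
Proof.
rewrite /dn; case: (leqP a b) => h.
  have -> : a - b = 0 by apply/eqP; rewrite subn_eq0.
  rewrite add0n subnE minus_INR; last by apply/leP.
  rewrite Rabs_minus_sym Rabs_right //; have : (INR a <= INR b)%R by apply: le_INR; apply/leP.
  lra.
have -> : b - a = 0 by apply/eqP; rewrite subn_eq0 ltnW.
rewrite addn0 subnE minus_INR; last by apply/leP; rewrite ltnW.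
rewrite Rabs_right //; have : (INR b <= INR a)%R by apply: le_INR; apply/leP; rewrite ltnW.
lra.
Qed.

Lemma exists_r (u : R) n : (16 <= u)%R -> exists r, r <= n /\ (16 * 4 ^ r <= u)%R /\ (r = n \/ (u < 16 * 4 ^ r.+1)%R).
Proof.
move=> hu; elim: n => [|n [r [rn [h1 h2]]]].
  exists 0%nat; split => //; split; first by rewrite /= Rmult_1_r.
  by left.
case: h2 => [e|lt]; last first.
  exists r; split; first by apply: leq_trans rn _.
  by split => //; right.
case: (Rlt_le_dec u (16 * 4 ^ r.+1)) => hh.
  exists r; split; first by apply: leq_trans rn _.
  by split => //; right.
exists n.+1; split => //; split; first by rewrite -e.
by left.
Qed.

Lemma pow4_ge1 z : (0 <= z)%Z -> (1 <= powerRZ 4 z)%R.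
Proof.
move=> z0; rewrite -(Z2Nat.id z z0) -pow_powerRZ; apply: pow_R1_Rle; lra.
Qed.

Lemma pow4_inv z : (powerRZ 4 z * powerRZ 4 (- z) = 1)%R.
Proof. by rewrite -powerRZ_add ?Z.add_opp_diag_r //; lra. Qed.

Lemma INR4 : INR 4 = 4%R.
Proof. simpl; ring. Qed.

Lemma dn_pos a b : a <> b -> 0 < dn a b.
Proof. rewrite /dn; lia. Qed.

Theorem lemma4 :
  exists C : R, (0 < C)%R /\
    forall (n : nat) (T : pt -> pt -> pt),
      (2 <= n)%nat ->
      (forall theta : R, lip_lt (fun z => psub (Tth T theta z) z) (/ (8 * INR n))) ->
      forall j k : Z,
        (IZR j < ln (INR n) / ln 4)%R ->
        (INR #|AjkT n j k T| <= C * powerRZ 4 (2 * Z.of_nat n - k - 2 * j))%R.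
Proof.
exists 1000%R; split; first lra.
move=> n T hn hlip j k hj.
have n2 : (2 <= INR n)%R by apply: (le_INR 2 n); apply/leP.
set l := (/ (8 * INR n))%R in hlip.
have l16 : (l <= / 16)%R by rewrite /l; apply: Rinv_le_contravar; lra.
have B0 : (0 < powerRZ 4 (-k))%R by apply: powerRZ_lt; lra.
have r0 : (0 < powerRZ 4 (-j))%R by apply: powerRZ_lt; lra.
have F0 : (0 < 4 ^ n)%R by apply: pow_lt; lra.
have s2 : (2 <= sqrt 5)%R.
  rewrite -(sqrt_square 2); last lra. apply: sqrt_le_1_alt; lra.
have s3 : (sqrt 5 <= 3)%R.
  rewrite -(sqrt_square 3); last lra. apply: sqrt_le_1_alt; lra.
have s55 : (sqrt 5 * sqrt 5 = 5)%R by rewrite sqrt_sqrt; lra.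
have eT : powerRZ 4 (2 * Z.of_nat n - k - 2 * j) =
          (4 ^ n * 4 ^ n * powerRZ 4 (-k) * (powerRZ 4 (-j) * powerRZ 4 (-j)))%R.
  rewrite (_ : (2 * Z.of_nat n - k - 2 * j = Z.of_nat n + Z.of_nat n + - k + (- j + - j))%Z); last lia.
  rewrite !powerRZ_add; try lra. by rewrite -pow_powerRZ.
rewrite eT.
have hneg : (j < 0)%Z -> (1 <= powerRZ 4 (-j))%R by move=> h; apply: pow4_ge1; lia.
have hpos : (0 <= j)%Z -> (powerRZ 4 (-j) <= 1)%R /\ (l <= powerRZ 4 (-j) / 8)%R.
  move=> h; have pw4 := pow4_inv j; have g1 := pow4_ge1 h.
  have lt : (powerRZ 4 j < INR n)%R.
    rewrite powerRZ_Rpower; last lra.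
    rewrite /Rpower -[X in (_ < X)%R](exp_ln (INR n)); last lra.
    apply: exp_increasing.
    have l4 : (0 < ln 4)%R by rewrite -ln_1; apply: ln_increasing; lra.
    have := Rmult_lt_compat_r (ln 4) _ _ l4 hj.
    rewrite /Rdiv Rmult_assoc Rinv_l; lra.
  have le : (l * (8 * INR n) = 1)%R by rewrite /l Rinv_l; lra.
  split; nra.
move: (powerRZ 4 (-k)) (powerRZ 4 (-j)) B0 r0 (fun PQ => @pw n T j k l PQ hlip l16) hneg hpos => B rho B0 r0 PW hneg hpos.
case: (Z_lt_ge_dec j 0) => hj0.
-
  have r1 := hneg hj0.
  set M := (8/7*(1+rho)*B*4^n*sqrt 5/3)%R.
  have M0 : (0 <= M)%R.
    have p1 : (0 < (1 + rho) * B)%R by nra.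
    have p2 : (0 < 4 ^ n * sqrt 5)%R by nra.
    have -> : M = ((1 + rho) * B * (4 ^ n * sqrt 5) * (8 / 21))%R by rewrite /M; field.
    nra.
  have [m [hm1 hm2]] := floor_nat M0.
  have sub : AjkT n j k T \subset [set PQ : csquare n * csquare n | 0 < dn (PP PQ.1) (PP PQ.2) <= m].
    apply/subsetP => PQ h; rewrite inE; have [g1 [g2 _]] := PW PQ h.
    apply/andP; split; first exact: dn_pos.
    apply: hm2; by rewrite INR_dn.
  have c1 := leq_trans (subset_leq_card sub) (L1 (@PP_inj n) (@PP_lt n) m).
  have c2 : (INR #|AjkT n j k T| <= INR (4^n * (2*m)))%R by apply: le_INR; apply/leP.
  rewrite INR_mul INR_exp INR4 INR_mul (_ : INR 2 = 2%R) in c2; last by simpl; ring.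
  apply: (Rle_trans _ _ _ c2).
  have K0 : (0 < 4 ^ n * 4 ^ n * B)%R by repeat apply: Rmult_lt_0_compat.
  apply: (Rle_trans _ (4 ^ n * (2 * M))%R); first by nra.
  have e : (4 ^ n * (2 * M) = 4 ^ n * 4 ^ n * B * ((1 + rho) * sqrt 5 * 16 / 21))%R by rewrite /M; field.
  rewrite e (_ : (1000 * (4 ^ n * 4 ^ n * B * (rho * rho)) = 4 ^ n * 4 ^ n * B * (1000 * (rho * rho)))%R); last ring.
  apply: Rmult_le_compat_l; first lra.
  nra.
- have [r1 lr] := hpos (Z.ge_le _ _ hj0).
  set M := (3 * sqrt 5 / 7 * rho * B * 4 ^ n)%R.
  have M0 : (0 <= M)%R.
    have p1 : (0 < rho * B)%R by nra.
    have p2 : (0 < 4 ^ n * sqrt 5)%R by nra.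
    have -> : M = (rho * B * (4 ^ n * sqrt 5) * (3 / 7))%R by rewrite /M; field.
    nra.
  have [m [hm1 hm2]] := floor_nat M0.
  have MM : (M * M = 45 / 49 * (4 ^ n * 4 ^ n * B * (rho * rho)) * B)%R.
    rewrite /M (_ : forall a : R, 3 * sqrt 5 / 7 * a = sqrt 5 * (3 / 7 * a))%R; last by move=> a; field.
    have -> : forall a, (sqrt 5 * a * B * 4 ^ n * (sqrt 5 * a * B * 4 ^ n) = (sqrt 5 * sqrt 5) * (a * B * 4 ^ n) * (a * B * 4 ^ n))%R by move=> a; ring.
    rewrite s55; field.
  have hmM : (INR m * INR m <= M * M)%R by have := pos_INR m; nra.
  have K0 : (0 < 4 ^ n * 4 ^ n * B * (rho * rho))%R by repeat apply: Rmult_lt_0_compat.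
  set K := (4 ^ n * 4 ^ n * B * (rho * rho))%R in K0 MM *.
  have PW2 : forall PQ, PQ \in AjkT n j k T -> (0 < dn (PP PQ.1) (PP PQ.2) <= m) /\
        (sqrt 5 / 28 * B * 4 ^ n <= Rabs (IZR (YY PQ.1 - YY PQ.2)))%R.
    move=> PQ h; have [_ [g2 g3]] := PW PQ h; have [g3a g3b] := g3 r1 lr.
    split => //; apply/andP; split; first exact: dn_pos.
    apply: hm2; by rewrite INR_dn.
  set u := (4 ^ n * B)%R.
  case: (Rlt_le_dec u 16) => hu.
  + have sub : AjkT n j k T \subset [set PQ : csquare n * csquare n | 0 < dn (PP PQ.1) (PP PQ.2) <= m].
      apply/subsetP => PQ h; rewrite inE; by have [] := PW2 PQ h.
    have c1 := leq_trans (subset_leq_card sub) (L1 (@PP_inj n) (@PP_lt n) m).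
    have mm : m <= m * m by nia.
    have c2 : (INR #|AjkT n j k T| <= INR (4^n * (2*(m * m))))%R.
      apply: le_INR; apply/leP; apply: leq_trans c1 _; rewrite leq_mul2l; apply/orP; right; by rewrite leq_mul2l mm orbT.
    rewrite !INR_mul INR_exp INR4 (_ : INR 2 = 2%R) in c2; last by simpl; ring.
    apply: (Rle_trans _ _ _ c2).
    apply: (Rle_trans _ (4 ^ n * (2 * (M * M)))%R); first by nra.
    rewrite MM.
    have -> : (4 ^ n * (2 * (45 / 49 * K * B)) = K * (90 / 49 * u))%R by rewrite /u; field.
    nra.
  + have [r [rn [h16 hr]]] := exists_r n hu.
    have R0 : (0 < 4 ^ r)%R by apply: pow_lt; lra.
    have PW3 : forall PQ, PQ \in AjkT n j k T ->
        (0 < dn (PP PQ.1) (PP PQ.2) <= m) && (PP PQ.1 %/ 4 ^ r != PP PQ.2 %/ 4 ^ r).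
      move=> PQ h; have [g1 g2] := PW2 PQ h; rewrite g1 /=.
      have hz : (Z.of_nat (4 ^ r) <= Z.abs (YY PQ.1 - YY PQ.2))%Z.
        apply: le_IZR; rewrite abs_IZR -INR_IZR_INZ INR_exp INR4.
        apply: (Rle_trans _ _ _ _ g2).
        have -> : (sqrt 5 / 28 * B * 4 ^ n = sqrt 5 / 28 * u)%R by rewrite /u; field.
        nra.
      apply/negP => /eqP e.
      have := @block (ca PQ.1.1) (ca PQ.1.2) (ca PQ.2.1) (ca PQ.2.2) n r rn e.
      rewrite -/(YY PQ.1) -/(YY PQ.2) => hh; lia.
    case: hr => [er|hr].
      have e0 : #|AjkT n j k T| = 0.
        apply/eqP; rewrite cards_eq0; apply/eqP/setP => PQ; rewrite in_set0.
        apply/negbTE/negP => h; have := PW3 PQ h; rewrite er !divn_small ?PP_lt //.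
        by rewrite eqxx andbF.
      rewrite e0 /=; nra.
    have sub : AjkT n j k T \subset [set PQ : csquare n * csquare n |
        (0 < dn (PP PQ.1) (PP PQ.2) <= m) && (PP PQ.1 %/ 4 ^ r != PP PQ.2 %/ 4 ^ r)].
      apply/subsetP => PQ h; rewrite inE; exact: PW3.
    have NAB : 4 ^ n = 4 ^ (n - r) * 4 ^ r by rewrite -expnD subnK.
    have c1 := leq_trans (subset_leq_card sub) (L2 (@PP_inj n) (@PP_lt n) m NAB (expn_gt0 4 r)).
    have c2 : (INR #|AjkT n j k T| <= INR (4 ^ (n - r) * (2 * m) * (2 * m)))%R by apply: le_INR; apply/leP.
    rewrite !INR_mul INR_exp INR4 (_ : INR 2 = 2%R) in c2; last by simpl; ring.
    apply: (Rle_trans _ _ _ c2).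
    have G0 : (0 < 4 ^ (n - r))%R by apply: pow_lt; lra.
    have GR : (4 ^ (n - r) * 4 ^ r = 4 ^ n)%R by rewrite -pow_add plusE subnK.
    apply: (Rle_trans _ (4 ^ (n - r) * 4 * (M * M))%R); first by nra.
    rewrite MM.
    have GB : (4 ^ (n - r) * B < 64)%R.
      have h64 : (4 ^ (n - r) * B * 4 ^ r < 64 * 4 ^ r)%R.
        rewrite (_ : (4 ^ (n - r) * B * 4 ^ r = u)%R); last by rewrite /u -GR; ring.
        move: hr; rewrite /= => hr; lra.
      by apply: (Rmult_lt_reg_r (4 ^ r)).
    have -> : (4 ^ (n - r) * 4 * (45 / 49 * K * B) = K * (180 / 49 * (4 ^ (n - r) * B)))%R by field.
    nra.
Qed.
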